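(* There is an absolute constant $C>0$ such that every Boolean matrix $F\in\{0,1\}^{\mathcal X\times\mathcal Y}$ (with $\mathcal X,\mathcal Y$ finite nonempty) satisfies $\log_2\!\big(1/\mathrm{wrect}(F)\big)\le C\cdot \mathsf{N}(F)$; that is, $\mathsf{N}(F)\gtrsim \log(1/\mathrm{wrect}(F))$.
   Context: A combinatorial rectangle is a set $S\times T$ with $S\subseteq\mathcal X$, $T\subseteq\mathcal Y$; it is monochromatic in $F$ if $F$ is constant on it. The weighted rectangle ratio is $\mathrm{wrect}(F)=\inf_{\mu}\max_R \mu(R)$, where the infimum is over all product probability measures $\mu=\mu_{\mathcal X}\times\mu_{\mathcal Y}$ on $\mathcal X\times\mathcal Y$ and the maximum is over monochromatic rectangles $R$ of $F$. A deterministic protocol is a binary tree in which each internal node is owned by Alice (labelled by a function $\mathcal X\to\{0,1\}$) or Bob (labelled by a function $\mathcal Y\to\{0,1\}$); on input $(x,y)$ the players follow the path determined by these bits, and the leaf reached gives the output in $\{0,1\}$; its cost is the tree height. A nondeterministic protocol consists of a family of deterministic protocols $\pi_a$ indexed by advice strings $a$ of some length $k$; it computes $F$ if for all $(x,y)$: $F(x,y)=1$ iff there exists $a$ with $\pi_a(x,y)=1$. Its cost is $k$ plus the maximum cost of $\pi_a$ over all $a$. $\mathsf{N}(F)$ is the minimum cost of a nondeterministic protocol computing $F$. Logarithms are base 2. *)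

(* Defs.v *)
From HB Require Import structures.
From mathcomp Require Import all_boot all_order all_algebra.
From mathcomp Require Import all_classical all_reals.
From mathcomp Require Import exp.

Set Implicit Arguments.
Unset Strict Implicit.
Unset Printing Implicit Defensive.

Import Order.TTheory GRing.Theory Num.Theory.

Section Rect.
Context {R : realType} {X Y : finType}.
Local Open Scope ring_scope.

Definition monochromatic (F : X -> Y -> bool) (S : {set X}) (T : {set Y}) : bool :=
  [exists b : bool, [forall x in S, [forall y in T, F x y == b]]].

Definition is_prob {Z : finType} (m : Z -> R) : Prop :=
  (forall z, 0 <= m z) /\ \sum_(z : Z) m z = 1.

Definition prod_meas (muX : X -> R) (muY : Y -> R) (S : {set X}) (T : {set Y}) : R :=
  (\sum_(x in S) muX x) * (\sum_(y in T) muY y).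

(* max over monochromatic rectangles R of mu(R) (the empty rectangle is
   monochromatic with measure 0, so 0 is a correct neutral element) *)
Definition max_mono_rect (F : X -> Y -> bool) (muX : X -> R) (muY : Y -> R) : R :=
  \big[Num.max/0]_(S : {set X})
    \big[Num.max/0]_(T : {set Y} | monochromatic F S T) prod_meas muX muY S T.

Definition wrect (F : X -> Y -> bool) : R :=
  inf [set r : R | exists (muX : X -> R) (muY : Y -> R),
         is_prob muX /\ is_prob muY /\ r = max_mono_rect F muX muY].

End Rect.

Definition log2 {R : realType} (v : R) : R := (ln v / ln 2)%R.

Inductive protocol (X Y : Type) : Type :=
| PLeaf : bool -> protocol X Y
| PAlice : (X -> bool) -> protocol X Y -> protocol X Y -> protocol X Y
| PBob : (Y -> bool) -> protocol X Y -> protocol X Y -> protocol X Y.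

Arguments PLeaf {X Y}.

Fixpoint prun {X Y : Type} (p : protocol X Y) (x : X) (y : Y) : bool :=
  match p with
  | PLeaf b => b
  | PAlice f p0 p1 => if f x then prun p1 x y else prun p0 x y
  | PBob g p0 p1 => if g y then prun p1 x y else prun p0 x y
  end.

Fixpoint pheight {X Y : Type} (p : protocol X Y) : nat :=
  match p with
  | PLeaf _ => 0
  | PAlice _ p0 p1 => (maxn (pheight p0) (pheight p1)).+1
  | PBob _ p0 p1 => (maxn (pheight p0) (pheight p1)).+1
  end.

(* A nondeterministic protocol with advice length k: a family of
   deterministic protocols indexed by advice strings a in {0,1}^k. *)
Definition nd_computes {X Y : Type} (F : X -> Y -> bool) (k : nat)
  (pi : k.-tuple bool -> protocol X Y) : Prop :=
  forall x y, F x y = true <-> exists a : k.-tuple bool, prun (pi a) x y = true.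
Arguments nd_computes {X Y} F k pi.

Definition nd_cost {X Y : Type} (k : nat) (pi : k.-tuple bool -> protocol X Y) : nat :=
  k + \max_(a : k.-tuple bool) pheight (pi a).
Arguments nd_cost {X Y} k pi.

Definition has_nd_protocol_of_cost {X Y : Type} (F : X -> Y -> bool) (n : nat) : bool :=
  `[< exists (k : nat) (pi : k.-tuple bool -> protocol X Y),
        nd_computes F k pi /\ nd_cost k pi = n >].

Fixpoint triv_B {X Y : eqType} (F : X -> Y -> bool) (x0 : X) (s : seq Y)
  : protocol X Y :=
  match s with
  | [::] => PLeaf false
  | y0 :: s' => PBob (fun y => y == y0) (triv_B F x0 s') (PLeaf (F x0 y0))
  end.

Fixpoint triv_A {X Y : eqType} (F : X -> Y -> bool) (s : seq X) (t : seq Y)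
  : protocol X Y :=
  match s with
  | [::] => PLeaf false
  | x0 :: s' => PAlice (fun x => x == x0) (triv_A F s' t) (triv_B F x0 t)
  end.

Lemma triv_B_ok {X Y : eqType} (F : X -> Y -> bool) x0 (s : seq Y) x y :
  y \in s -> prun (triv_B F x0 s) x y = F x0 y.
Proof.
elim: s => [//|y0 s IH] /=; rewrite in_cons.
by case: eqP => [-> //|_] /= /IH.
Qed.

Lemma triv_A_ok {X Y : eqType} (F : X -> Y -> bool) (s : seq X) (t : seq Y) x y :
  x \in s -> y \in t -> prun (triv_A F s t) x y = F x y.
Proof.
elim: s => [//|x0 s IH] /=; rewrite in_cons => + yt.
case: eqP => [-> _|_ /= xs]; first exact: triv_B_ok.
exact: IH.
Qed.

Lemma nd_protocol_exists {X Y : finType} (F : X -> Y -> bool) :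
  exists n, has_nd_protocol_of_cost F n.
Proof.
exists (nd_cost 0 (fun _ : 0.-tuple bool => triv_A F (enum X) (enum Y))).
apply/asboolP; exists 0, (fun _ => triv_A F (enum X) (enum Y)); split => // x y.
rewrite triv_A_ok ?mem_enum //; split => [->|[]//].
by exists [tuple].
Qed.

Definition Ncc {X Y : finType} (F : X -> Y -> bool) : nat :=
  ex_minn (nd_protocol_exists F).

(* Main.v *)
Require Import Defs.
From HB Require Import structures.
From mathcomp Require Import all_boot all_order all_algebra.
From mathcomp Require Import all_classical all_reals.
From mathcomp Require Import exp.
From mathcomp Require Import ring lra zify.
Import Order.TTheory GRing.Theory Num.Theory.
Local Open Scope ring_scope.

Section Key.
Context {R : realType} {X Y : finType}.

Lemma mono_le (F : X -> Y -> bool) (muX : X -> R) (muY : Y -> R) S T :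
  monochromatic F S T -> prod_meas muX muY S T <= max_mono_rect F muX muY.
Proof.
move=> HM; rewrite /max_mono_rect.
apply: le_trans (le_bigmax _ _ S).
exact: le_bigmax_cond.
Qed.

Lemma sum_ge0' {Z : finType} (m : Z -> R) (A : {set Z}) :
  (forall z, 0 <= m z) -> 0 <= \sum_(z in A) m z.
Proof. by move=> H; apply: sumr_ge0 => z _. Qed.

Lemma compl_union_ge {Z I : finType} (m : Z -> R) (A : I -> {set Z}) (P : pred I) :
  is_prob m ->
  1 - \sum_(i | P i) \sum_(z in A i) m z <=
  \sum_(z in ~: \bigcup_(i | P i) A i) m z.
Proof.
move=> [m0 m1].
have -> : \sum_(i | P i) \sum_(z in A i) m z =
          \sum_z \sum_(i | P i) (if z \in A i then m z else 0).
  rewrite exchange_big /=; apply: eq_bigr => i _.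
  by rewrite big_mkcond.
rewrite -m1 -sumrB [X in _ <= X]big_mkcond /=.
apply: ler_sum => z _.
case: ifP => Hz.
  have -> : \sum_(i | P i) (if z \in A i then m z else 0) =
            \sum_(i | P i) 0 :> R.
    apply: eq_bigr => i Pi; case: ifP => // zA.
    move: Hz; rewrite finset.in_setC => /negP; case; apply/bigcupP; by exists i.
  by rewrite big1_eq subr0.
move: Hz; rewrite finset.in_setC => /negbFE /bigcupP [i Pi zA].
rewrite (bigD1 i) //= zA opprD addrA subrr add0r oppr_le0.
by apply: sumr_ge0 => j _; case: ifP.
Qed.

Lemma sum_sub_le {I : finType} (P : pred I) (f : I -> R) (e : R) :
  0 <= e -> (forall i, P i -> f i <= e) ->
  \sum_(i | P i) f i <= e *+ #|I|.
Proof.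
move=> e0 H; apply: (@le_trans _ _ (\sum_(i : I) e)).
  rewrite big_mkcond /=; apply: ler_sum => i _.
  by case: ifP => // /H.
by rewrite sumr_const.
Qed.

Lemma key (I : finType) (F : X -> Y -> bool) (A : I -> {set X}) (B : I -> {set Y})
  (muX : X -> R) (muY : Y -> R) :
  is_prob muX -> is_prob muY ->
  (forall x y, F x y = [exists i, (x \in A i) && (y \in B i)]) ->
  (0 < #|I|)%N ->
  ((4 * #|I| ^ 2)%N%:R)^-1 <= max_mono_rect F muX muY.
Proof.
move=> pX pY HF I0.
set t : R := #|I|%:R.
have t1 : 1 <= t by rewrite /t ler1n.
have t0 : 0 < t by apply: lt_le_trans t1.
set e : R := (2 * t)^-1.
have e0 : 0 <= e by rewrite /e invr_ge0 mulr_ge0 // ltW.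
have te : e *+ #|I| = 2^-1.
  rewrite -mulr_natr -/t /e; field; by rewrite gt_eqF.
have goal4 : ((4 * #|I| ^ 2)%N%:R)^-1 = e * e :> R.
  by rewrite /e -invfM natrM natrX -/t; congr (_^-1); ring.
rewrite goal4.
case: (boolP [exists i, (e <= \sum_(x in A i) muX x) && (e <= \sum_(y in B i) muY y)]).
  move=> /existsP [i /andP [h1 h2]].
  apply: le_trans (@mono_le F muX muY (A i) (B i) _).
    by rewrite /prod_meas ler_pM.
  apply/existsP; exists true; apply/forallP => x; apply/implyP => xA.
  apply/forallP => y; apply/implyP => yB; rewrite HF.
  by apply/eqP/existsP; exists i; rewrite xA yB.
move=> /existsPn Hn.
pose P := fun i => (\sum_(x in A i) muX x) < e.
have HB : forall i, ~~ P i -> \sum_(y in B i) muY y < e.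
  move=> i; move: (Hn i); rewrite negb_and /P -!ltNge => /orP [h|h] //.
  by rewrite h.
apply: (@le_trans _ _ (prod_meas muX muY (~: \bigcup_(i | P i) A i)
                                          (~: \bigcup_(i | ~~ P i) B i))).
  rewrite /prod_meas.
  have hX : 2^-1 <= \sum_(x in ~: \bigcup_(i | P i) A i) muX x.
    apply: le_trans (compl_union_ge _ _ _ pX).
    rewrite lerBrDr addrC -lerBrDr.
    have -> : 1 - 2^-1 = 2^-1 :> R by field.
    rewrite -te; apply: sum_sub_le => // i Pi; exact: ltW.
  have hY : 2^-1 <= \sum_(y in ~: \bigcup_(i | ~~ P i) B i) muY y.
    apply: le_trans (compl_union_ge _ _ _ pY).
    rewrite lerBrDr addrC -lerBrDr.
    have -> : 1 - 2^-1 = 2^-1 :> R by field.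
    rewrite -te; apply: sum_sub_le => // i Pi; apply: ltW; exact: HB.
  apply: le_trans (ler_pM _ _ hX hY); rewrite ?invr_ge0 //.
  have e2 : e <= 2^-1.
    rewrite /e lef_pV2 ?posrE ?mulr_gt0 //.
    by rewrite -[leLHS]mulr1 ler_pM.
  by apply: ler_pM.
apply: mono_le; apply/existsP; exists false.
apply/forallP => x; apply/implyP => xS; apply/forallP => y; apply/implyP => yT.
rewrite HF; apply/eqP/negbTE/existsPn => i; apply/negP => /andP [xA yB].
case: (boolP (P i)) => Pi.
  by move: xS; rewrite finset.in_setC => /negP; apply; apply/bigcupP; exists i.
by move: yT; rewrite finset.in_setC => /negP; apply; apply/bigcupP; exists i.
Qed.
End Key.

Section Prot.
Context {X Y : finType}.

Fixpoint rA (p : protocol X Y) (w : seq bool) : {set X} :=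
  match p, w with
  | PLeaf b, _ => if b then [set: _] else (finset.set0)
  | PAlice f p0 p1, c :: w' => [set x | f x == c] :&: rA (if c then p1 else p0) w'
  | PBob g p0 p1, c :: w' => rA (if c then p1 else p0) w'
  | _, [::] => (finset.set0)
  end.

Fixpoint rB (p : protocol X Y) (w : seq bool) : {set Y} :=
  match p, w with
  | PLeaf b, _ => [set: _]
  | PAlice f p0 p1, c :: w' => rB (if c then p1 else p0) w'
  | PBob g p0 p1, c :: w' => [set y | g y == c] :&: rB (if c then p1 else p0) w'
  | _, [::] => (finset.set0)
  end.

Lemma rect_sound p w x y : x \in rA p w -> y \in rB p w -> prun p x y.
Proof.
elim: p w => [b|f p0 IH0 p1 IH1|g p0 IH0 p1 IH1] [|c w] //=.
- by case: b; rewrite ?inE.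
- by case: b; rewrite ?inE.
- by rewrite inE.
- rewrite inE => /andP [H1 H]; rewrite inE in H1; move/eqP: H1 => ->.
  by case: c H => H Hy; [exact: IH1 H Hy|exact: IH0 H Hy].
- by rewrite inE.
- move=> H; rewrite inE => /andP [H1 Hy]; rewrite inE in H1; move/eqP: H1 => ->.
  by case: c H Hy => H Hy; [exact: IH1 H Hy|exact: IH0 H Hy].
Qed.

Lemma rect_complete p x y h : (pheight p <= h)%N -> prun p x y ->
  exists w : seq bool, size w = h /\ x \in rA p w /\ y \in rB p w.
Proof.
elim: p h => [b|f p0 IH0 p1 IH1|g p0 IH0 p1 IH1] h /=.
- move=> _ ->; exists (nseq h false); rewrite size_nseq.
  by case: h => [|h] /=; rewrite !inE.
- case: h => [//|h]; rewrite ltnS geq_max => /andP [h0 h1].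
  case E: (f x) => Hp.
    have [w [sw [xA yB]]] := IH1 h h1 Hp.
    by exists (true :: w); rewrite /= sw !inE E.
  have [w [sw [xA yB]]] := IH0 h h0 Hp.
  by exists (false :: w); rewrite /= sw !inE E.
- case: h => [//|h]; rewrite ltnS geq_max => /andP [h0 h1].
  case E: (g y) => Hp.
    have [w [sw [xA yB]]] := IH1 h h1 Hp.
    by exists (true :: w); rewrite /= sw !inE E.
  have [w [sw [xA yB]]] := IH0 h h0 Hp.
  by exists (false :: w); rewrite /= sw !inE E.
Qed.
End Prot.

Section Wrect.
Context {R : realType} {X Y : finType}.

Lemma unif_prob {Z : finType} : (0 < #|Z|)%N -> is_prob (fun _ : Z => (#|Z|%:R)^-1 : R).
Proof.
move=> Z0; split => [z|]; first by rewrite invr_ge0.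
rewrite sumr_const; change #|xpredT| with #|Z|; rewrite -[X in X = 1]mulr_natr mulVf //.
by rewrite pnatr_eq0 -lt0n.
Qed.

Lemma wrect_ge (F : X -> Y -> bool) (w : R) :
  (0 < #|X|)%N -> (0 < #|Y|)%N ->
  (forall muX muY, is_prob muX -> is_prob muY -> w <= max_mono_rect F muX muY) ->
  w <= wrect F.
Proof.
move=> X0 Y0 H; apply: lb_le_inf.
  exists (max_mono_rect F (fun _ => (#|X|%:R)^-1) (fun _ => (#|Y|%:R)^-1)).
  by exists (fun _ => (#|X|%:R)^-1), (fun _ => (#|Y|%:R)^-1); split; [|split]; 
    rewrite //; apply: unif_prob.
by move=> r [muX [muY [pX [pY ->]]]]; apply: H.
Qed.
End Wrect.

Lemma sum_setT_eq {R : realType} {Z : finType} (m : Z -> R) :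
  \sum_(z in [set: Z]) m z = \sum_z m z.
Proof. by apply: eq_bigl => z; rewrite finset.in_setT. Qed.

Lemma log2_le {R : realType} (u v : R) : 0 < u -> u <= v -> log2 u <= log2 v.
Proof.
move=> u0 uv; rewrite /log2 ler_wpM2r ?invr_ge0 ?ln_ge0 ?ler1n //.
by rewrite ler_ln ?posrE // (lt_le_trans u0).
Qed.

Lemma log2_pow {R : realType} (m : nat) : log2 ((2 ^ m)%N%:R : R) = m%:R.
Proof.
have H2 : ln (2:R) != 0 by apply: lt0r_neq0; apply: ln_gt0; rewrite ltr1n.
rewrite /log2 natrX lnXn //; rewrite -[_ *+ m]mulr_natr mulrAC mulfV ?mul1r //.
Qed.

Theorem proposition4p1 (R : realType) :
  exists C : R, 0 < C /\
    forall (X Y : finType) (F : X -> Y -> bool),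
      (0 < #|X|)%N -> (0 < #|Y|)%N ->
      log2 ((wrect F : R)^-1) <= C * (Ncc F)%:R.
Proof.
exists 4; split => // X Y F X0 Y0.
rewrite /Ncc; case: ex_minnP => n /asboolP [k [pi [Hc Hcost]]] _.
set h := \max_(a : k.-tuple bool) pheight (pi a).
have hle : forall a, (pheight (pi a) <= h)%N by move=> a; exact: leq_bigmax.
have Hn : (k + h = n)%N by [].
case: n Hcost Hn => [|n] Hcost Hn.
  have /andP [/eqP k0 /eqP h0] : ((k == 0) && (h == 0))%N by rewrite -addn_eq0 Hn.
  subst k.
  set a0 : 0.-tuple bool := [tuple].
  have Hl : pheight (pi a0) = 0%N by apply/eqP; rewrite -leqn0 -h0 hle.
  case Epi: (pi a0) Hl => [b|? ? ?|? ? ?] //= _.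
  have HF : forall x y, F x y = b.
    move=> x y; apply/idP/idP.
      by move/Hc => [a]; rewrite (tuple0 a) -/a0 Epi.
    by move=> hb; apply/Hc; exists a0; rewrite Epi.
  have W1 : (1 : R) <= wrect F.
    apply: wrect_ge => // muX muY pX pY.
    apply: le_trans (@mono_le R X Y F muX muY [set: X] [set: Y] _).
      case: pX => _ sX; case: pY => _ sY.
      by rewrite /prod_meas !sum_setT_eq sX sY mulr1.
    apply/existsP; exists b; apply/forallP => x; apply/implyP => _.
    by apply/forallP => y; apply/implyP => _; rewrite HF.
  rewrite mulr0 /log2 mulr_le0_ge0 ?invr_ge0 ?ln_ge0 ?ler1n //.
  by rewrite ln_le0 // invf_le1 // (lt_le_trans ltr01).
pose I : finType := (k.-tuple bool * h.-tuple bool)%type.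
pose A := fun i : I => rA (pi i.1) i.2.
pose B := fun i : I => rB (pi i.1) i.2.
have HF : forall x y, F x y = [exists i, (x \in A i) && (y \in B i)].
  move=> x y; apply/idP/idP.
    move/Hc => [a Hp].
    have [w [sw [xA yB]]] := @rect_complete X Y (pi a) x y h (hle a) Hp.
    apply/existsP; exists (a, @Tuple h bool w (introT eqP sw)).
    by rewrite /A /B /= xA yB.
  move/existsP => [[a w] /andP [xA yB]]; apply/Hc; exists a.
  exact: rect_sound xA yB.
have cI : #|I| = (2 ^ n.+1)%N.
  by rewrite card_prod !card_tuple card_bool -expnD Hn.
set W : R := ((4 * #|I| ^ 2)%N%:R)^-1.
have W0 : 0 < W by rewrite /W invr_gt0 ltr0n muln_gt0 expn_gt0 cI expn_gt0.
have HW : W <= wrect F.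
  apply: wrect_ge => // muX muY pX pY; apply: key => //.
  by rewrite cI expn_gt0.
have Winv : W^-1 = ((2 ^ (2 * n.+1 + 2))%N%:R).
  rewrite /W invrK cI; congr (_%:R); by rewrite expnD -expnM mulnC [(2 * _)%N]mulnC.
have wr0 : 0 < (wrect F : R) by exact: lt_le_trans W0 HW.
apply: le_trans (@log2_le R (wrect F : R)^-1 W^-1 _ _) _.
- by rewrite invr_gt0.
- by rewrite lef_pV2 ?posrE.
rewrite Winv log2_pow -natrM ler_nat; lia.
Qed.
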